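(* Let $G\in\mathbb{R}^{n_c\times n_z}$ have all rows nonzero, $S\in\mathbb{R}^{n_c\times n_x}$, $w\in\mathbb{R}^{n_c}$, and assume $\mathcal{V}=\{v\in\mathbb{R}^{n_x+n_z}: \bar Hv\le w\}\neq\emptyset$ where $\bar H=[-S,\;G]$. Let $i\in\{1,\dots,n_c\}$ and let $\sigma_i$ be as defined below. Then there is $M_0>0$ such that for every $M\ge M_0$, $$\sigma_i=\inf\Big\{r:\ v\in\mathcal{V},\ r\ge0,\ \delta\in\{0,1\}^{n_c},\ \frac{w_j-\bar H_jv}{\|\bar H_j\|}-M\delta_j<r\le\frac{w_j-\bar H_jv}{\|\bar H_j\|}+M(1-\delta_j)\ \forall j,\ \sum_{j=1}^{n_c}\delta_j<n_c-i\Big\},$$ i.e. $\sigma_i$ equals the optimal value of this mixed integer linear program (with $\inf\emptyset=+\infty$).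
   Context: $\bar H_j$ is the $j$-th row of $\bar H$, $w_j$ the $j$-th entry of $w$, $\mathcal{V}_j=\{v:\bar H_jv\le w_j\}$, $\mathcal{B}(v,r)$ the closed Euclidean ball. For $i\in\{1,\dots,n_c\}$, $\sigma_i=\sup\{r\ge0: \inf_{v\in\mathcal{V}}|\{j: \mathcal{B}(v,r)\subseteq\mathcal{V}_j\}|\ge n_c-i\}$ (possibly $+\infty$). The paper describes $M$ as ''a big number''; the claim makes this precise as ''for all sufficiently large $M$''. *)

(* Defs.v *)
From HB Require Import structures.
From mathcomp Require Import all_boot all_order all_algebra.
From mathcomp Require Import all_classical all_reals.
From mathcomp Require Import ereal.

Set Implicit Arguments. Unset Strict Implicit. Unset Printing Implicit Defensive.
Import Order.TTheory GRing.Theory Num.Theory.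
Local Open Scope ring_scope.
Local Open Scope classical_set_scope.

Section Defs.
Variable R : realType.

Definition Hbar (nc nx nz : nat) (S : 'M[R]_(nc, nx)) (G : 'M[R]_(nc, nz))
  : 'M[R]_(nc, nx + nz) := row_mx (- S) G.

Definition rownorm (m n : nat) (A : 'M[R]_(m, n)) (j : 'I_m) : R :=
  Num.sqrt (\sum_(k < n) A j k ^+ 2).

Definition enorm (n : nat) (v : 'cV[R]_n) : R :=
  Num.sqrt (\sum_(k < n) v k 0 ^+ 2).

Definition cball (n : nat) (v : 'cV[R]_n) (r : R) : set 'cV[R]_n :=
  [set u | enorm (u - v) <= r].

Definition Vj (m n : nat) (H : 'M[R]_(m, n)) (w : 'cV[R]_m) (j : 'I_m)
  : set 'cV[R]_n := [set v | (H *m v) j 0 <= w j 0].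

Definition Vset (m n : nat) (H : 'M[R]_(m, n)) (w : 'cV[R]_m) : set 'cV[R]_n :=
  [set v | forall j, (H *m v) j 0 <= w j 0].

Definition nfit (m n : nat) (H : 'M[R]_(m, n)) (w : 'cV[R]_m)
  (v : 'cV[R]_n) (r : R) : nat :=
  #|[set j : 'I_m | `[< cball v r `<=` Vj H w j >] ]|.

Definition sigma (m n : nat) (H : 'M[R]_(m, n)) (w : 'cV[R]_m) (i : nat)
  : \bar R :=
  ereal_sup [set r%:E | r in [set r : R | 0 <= r /\
     ((((m - i)%N%:R : R))%:E <= ereal_inf ((fun v : 'cV[R]_n => ((nfit H w v r)%:R : R)%:E) @` Vset H w))%E]].

Definition slack (m n : nat) (H : 'M[R]_(m, n)) (w : 'cV[R]_m)
  (j : 'I_m) (v : 'cV[R]_n) : R :=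
  (w j 0 - (H *m v) j 0) / rownorm H j.

Definition milp_value (m n : nat) (H : 'M[R]_(m, n)) (w : 'cV[R]_m) (i : nat)
  (M : R) : \bar R :=
  ereal_inf [set r%:E | r in [set r : R | exists (v : 'cV[R]_n) (delta : 'I_m -> bool),
     [/\ Vset H w v, 0 <= r,
         (forall j, slack H w j v - M * (delta j)%:R < r /\
                    r <= slack H w j v + M * (1 - (delta j)%:R)) &
         (\sum_(j < m) (delta j : nat) < m - i)%N]]].

End Defs.

(* Main.v *)
Require Import Defs.
From HB Require Import structures.
From mathcomp Require Import all_boot all_order all_algebra.
From mathcomp Require Import all_classical all_reals.
From mathcomp Require Import ereal.
Import Order.TTheory GRing.Theory Num.Theory.
Local Open Scope ring_scope.
Local Open Scope classical_set_scope.
From mathcomp Require Import zify ring lra.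
Section LP.
Variable R : realType.
Variable T : Type.
Variable seg : T -> T -> R -> T.
Definition aff (g : T -> R) := forall x y t, g (seg x y t) = g x + t * (g y - g x).
Definition feas (I E : seq (T -> R)) (p : T) :=
  (forall h, List.In h I -> h p <= 0) /\ (forall h, List.In h E -> h p = 0).

Lemma seg_feas (I E : seq (T -> R)) g p u :
  (forall h, List.In h I -> aff h) -> (forall h, List.In h E -> aff h) -> aff g ->
  feas I E p -> g p <= 0 -> feas I E u -> 0 < g u ->
  exists t, 0 <= t /\ feas I (g :: E) (seg p u t).
Proof.
move=> aI aE ag [pI pE] gp [uI uE] gu.
have hd : g p - g u < 0 by lra.
have hd0 : g p - g u != 0 by rewrite lt_eqF.
exists (g p / (g p - g u)).
have t0 : 0 <= g p / (g p - g u) by rewrite ler_ndivlMr // mul0r.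
have t1 : g p / (g p - g u) <= 1 by rewrite ler_ndivrMr // mul1r; lra.
split => //; split.
- move=> h hI; rewrite aI //.
  have := pI h hI; have := uI h hI => h1 h2.
  set t := g p / _ in t0 t1 *.
  have : t * (h u - h p) <= t * (- h p) by apply: ler_wpM2l => //; lra.
  have : t * (- h p) <= - h p by rewrite -[X in _ <= X]mul1r; apply: ler_wpM2r => //; lra.
  lra.
- move=> h /= [<-|hE]; last by rewrite aE // (uE h hE) (pE h hE) subrr mulr0 addr0.
  by rewrite ag -(opprB (g p) (g u)) mulrN divfK // subrr.
Qed.

Lemma lp_attain (f : T -> R) (I E : seq (T -> R)) :
  aff f -> (forall g, List.In g I -> aff g) -> (forall g, List.In g E -> aff g) ->
  (exists p, feas I E p) -> (exists lb, forall p, feas I E p -> lb <= f p) ->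
  exists q, feas I E q /\ forall p, feas I E p -> f q <= f p.
Proof.
move=> af; elim: I E => [|g I IH] E aI aE [p0 Hp0] [lb Hlb].
  exists p0; split => // p Hp; rewrite leNgt; apply/negP => Hlt.
  have hd : 0 < f p0 - f p by lra.
  pose t := (f p0 - lb + 1) / (f p0 - f p).
  have Hx : feas [::] E (seg p0 p t).
    split => // h hE; rewrite aE // (proj2 Hp0 h hE) (proj2 Hp h hE); lra.
  have := Hlb _ Hx; rewrite af.
  have -> : t * (f p - f p0) = - (f p0 - lb + 1).
    by rewrite /t -(opprB (f p0)) mulrN divfK // gt_eqF.
  have := Hlb _ Hp0; lra.
have aI' : forall h, List.In h I -> aff h by move=> h hI; apply: aI; right.
have ag : aff g by apply: aI; left.
have feasC : forall p, feas (g :: I) E p <-> g p <= 0 /\ feas I E p.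
  move=> p; split.
    by case=> h1 h2; split; [apply: h1; left| split => // h hI; apply: h1; right].
  by case=> h1 [h2 h3]; split => // h /= [<-|]; [| apply: h2].
have key : (exists q, feas (g :: I) E q /\ forall p, feas (g :: I) E p -> f q <= f p) \/
    (exists u, feas I E u /\ 0 < g u /\ forall p, feas (g :: I) E p -> f u <= f p).
  case: (boolp.pselect (exists lb', forall p, feas I E p -> lb' <= f p)) => [hb|hnb].
    have [|v' [Hv' Hmin]] := IH E aI' aE _ hb.
      by exists p0; have /feasC [] := Hp0.
    case: (leP (g v') 0) => gv.
      left; exists v'; split; first by apply/feasC.
      by move=> p /feasC [_ Hp]; exact: Hmin.
    right; exists v'; split => //; split => // p /feasC [_ Hp]; exact: Hmin.
  have : ~ (forall p, feas I E p -> lb <= f p) by move=> H; apply: hnb; exists lb.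
  move=> /boolp.existsNP [u /boolp.not_implyP [Hu /negP]]; rewrite -ltNge => fu.
  right; exists u; split => //; split.
    rewrite ltNge; apply/negP => gu; have := Hlb u (proj2 (feasC u) (conj gu Hu)); lra.
  move=> p Hp; have := Hlb p Hp; lra.
case: key => [//|[u [Hu [gu fu]]]].
have aE' : forall h, List.In h (g :: E) -> aff h by move=> h /= [<-|]//; apply: aE.
have [q [Hq Hqmin]] : exists q, feas I (g :: E) q /\ forall p, feas I (g :: E) p -> f q <= f p.
  apply: IH => //.
    have /feasC [gp0 Hp0'] := Hp0.
    by have [t [_ Ht]] := seg_feas _ _ _ _ _ aI' aE ag Hp0' gp0 Hu gu; exists (seg p0 u t).
  exists lb => p [h1 h2]; apply: Hlb; split.
    by move=> h /= [<-|hI]; [rewrite h2 //=; left | apply: h1].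
  by move=> h hE; apply: h2; right.
exists q; split.
  case: Hq => h1 h2; split; last by move=> h hE; apply: h2; right.
  by move=> h /= [<-|hI]; [rewrite h2 //=; left | apply: h1].
move=> p Hp; have /feasC [gp Hp'] := Hp.
have [t [t0 Ht]] := seg_feas _ _ _ _ _ aI' aE ag Hp' gp Hu gu.
apply: le_trans (Hqmin _ Ht) _; rewrite af.
have := fu p Hp => h.
have : t * (f u - f p) <= 0 by rewrite mulr_ge0_le0 //; lra.
lra.
Qed.
End LP.
Lemma mulmx_entry (R : realType) m n (H : 'M[R]_(m, n)) (v : 'cV[R]_n) j :
  (H *m v) j 0 = \sum_k H j k * v k 0.
Proof. by rewrite mxE. Qed.

Lemma ball_sub (R : realType) m n (H : 'M[R]_(m, n)) (w : 'cV[R]_m) j (v : 'cV[R]_n) r :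
  0 < rownorm H j -> 0 <= r ->
  (cball v r `<=` Vj H w j) <-> r <= slack H w j v.
Proof.
move=> ha r0; rewrite /slack ler_pdivlMr //.
set a := rownorm H j.
have SH : \sum_k H j k ^+ 2 = a ^+ 2 by rewrite /a /rownorm sqr_sqrtr // sumr_ge0 // => k _; apply: sqr_ge0.
split.
- move=> Hs.
  pose d : 'cV[R]_n := \col_k (r / a * H j k).
  have : Vj H w j (v + d).
    apply: Hs; rewrite /cball /= addrAC subrr add0r /enorm.
    have -> : \sum_k d k 0 ^+ 2 = r ^+ 2.
      rewrite (eq_bigr (fun k => (r / a) ^+ 2 * H j k ^+ 2)); last by move=> k _; rewrite mxE exprMn.
      by rewrite -mulr_sumr SH -exprMn divfK ?gt_eqF.
    by rewrite sqrtr_sqr ger0_norm.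
  rewrite /Vj /= mulmxDr mxE [X in _ + X]mxE.
  have -> : \sum_k H j k * d k 0 = r * a.
    rewrite (eq_bigr (fun k => (r / a) * H j k ^+ 2)); last by move=> k _; rewrite mxE; ring.
    by rewrite -mulr_sumr SH expr2 mulrA divfK ?gt_eqF.
  lra.
- move=> Hr u; rewrite /cball /Vj /= => hu.
  set d := u - v.
  have -> : u = v + d by rewrite /d addrC subrK.
  rewrite mulmxDr mxE [X in _ + X]mxE.
  suff : \sum_k H j k * d k 0 <= r * a by lra.
  have Sd : \sum_k d k 0 ^+ 2 <= r ^+ 2.
    have Sd0 : 0 <= \sum_k d k 0 ^+ 2 by rewrite sumr_ge0 // => k _; apply: sqr_ge0.
    by rewrite -(sqr_sqrtr Sd0) lerXn2r // ?nnegrE ?sqrtr_ge0.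
  case: (ltrgt0P r) r0 Sd => // [rpos _ Sd|-> _ Sd].
  + pose c := r / a.
    have c0 : 0 < c by rewrite divr_gt0.
    have : 0 <= \sum_k (d k 0 - c * H j k) ^+ 2 by rewrite sumr_ge0 // => k _; apply: sqr_ge0.
    rewrite (eq_bigr (fun k => d k 0 ^+ 2 - (2 * c) * (H j k * d k 0) + c ^+ 2 * H j k ^+ 2)); last by move=> k _; ring.
    rewrite big_split /= sumrB -!mulr_sumr SH.
    have -> : c ^+ 2 * a ^+ 2 = r ^+ 2 by rewrite -exprMn divfK ?gt_eqF.
    move=> h.
    have : 2 * c * (\sum_k H j k * d k 0) <= 2 * r ^+ 2 by lra.
    have -> : 2 * r ^+ 2 = 2 * c * (r * a) by rewrite /c; field; rewrite gt_eqF.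
    by rewrite ler_pM2l // mulr_gt0.
  + have d0 : forall k, d k 0 = 0.
      move=> k; apply/eqP; rewrite -sqrf_eq0; apply/eqP.
      apply: (@psumr_eq0P _ _ predT (fun k => d k 0 ^+ 2)) => //.
        by move=> k' _; apply: sqr_ge0.
      apply/eqP; rewrite eq_le sumr_ge0 ?andbT; last by move=> k' _; apply: sqr_ge0.
      by move: Sd; rewrite expr0n.
    by rewrite big1 ?mul0r // => k _; rewrite d0 mulr0.
Qed.

Lemma card_sum m (P : 'I_m -> bool) : (\sum_(j < m) (P j : nat))%N = #|[set j | P j]%SET|.
Proof.
rewrite -sum1_card [RHS]big_mkcond /=; apply: eq_bigr => j _; rewrite !inE; by case: (P j).
Qed.

Lemma in_map_ex (A B : Type) (F : A -> B) (s : seq A) h :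
  List.In h (map F s) -> exists2 x, List.In x s & h = F x.
Proof.
elim: s => [//|x s IH] /= [<-|/IH [y ys ->]]; first by exists x; [left|].
by exists y; [right|].
Qed.

Lemma in_map_in (A B : Type) (F : A -> B) (s : seq A) x :
  List.In x s -> List.In (F x) (map F s).
Proof. by elim: s => [//|y s IH] /= [->|/IH]; [left|right]. Qed.

Lemma In_mem (T : eqType) (s : seq T) x : List.In x s <-> x \in s.
Proof.
elim: s => [//|y s IH] /=; rewrite in_cons; split.
  by case=> [->|/IH ->]; rewrite ?eqxx ?orbT.
by case/orP => [/eqP ->|/IH]; [left|right].
Qed.

Arguments in_map_ex {A B F s h}.
Arguments in_map_in {A B F s x}.
Arguments In_mem {T s x}.

Lemma slack_aff (R : realType) m n (H : 'M[R]_(m, n)) (w : 'cV[R]_m) j (v v' : 'cV[R]_n) t :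
  slack H w j (v + t *: (v' - v)) = slack H w j v + t * (slack H w j v' - slack H w j v).
Proof.
rewrite /slack mulmxDr -scalemxAr mulmxBr.
rewrite !mxE; ring.
Qed.

Lemma Hv_aff (R : realType) m n (H : 'M[R]_(m, n)) j (v v' : 'cV[R]_n) t :
  (H *m (v + t *: (v' - v))) j 0 = (H *m v) j 0 + t * ((H *m v') j 0 - (H *m v) j 0).
Proof.
rewrite mulmxDr -scalemxAr mulmxBr.
by rewrite !mxE.
Qed.

Lemma sup_pinfty (R : realType) (A : set R) :
  (forall x, exists2 y, A y & x <= y) -> ereal_sup [set r%:E | r in A] = +oo%E.
Proof.
move=> HA; case E: (ereal_sup _) => [s| |] //.
- have [y Ay hy] := HA (s + 1).
  have := @ereal_sup_ubound R [set r%:E | r in A] y%:E; rewrite E lee_fin => h.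
  have h2 := h (ex_intro2 _ _ y Ay erefl); clear E h; exfalso; lra.
- have [y Ay _] := HA 0.
  have := @ereal_sup_ubound R [set r%:E | r in A] y%:E; rewrite E leeNy_eq => h.
  by have := h (ex_intro2 _ _ y Ay erefl).
Qed.

Theorem lemma7 (R : realType) (nc nx nz : nat)
  (G : 'M[R]_(nc, nz)) (S : 'M[R]_(nc, nx)) (w : 'cV[R]_nc) (i : nat) :
  (forall j : 'I_nc, row j G != 0) ->
  Vset (Hbar S G) w !=set0 ->
  (1 <= i <= nc)%N ->
  exists M0 : R, 0 < M0 /\
    forall M : R, M0 <= M ->
      sigma (Hbar S G) w i = milp_value (Hbar S G) w i M.
Proof.
move=> hG [v0 Hv0] /andP[hi1 hi2].
set H := Hbar S G.
have ha : forall j, 0 < rownorm H j.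
  move=> j; rewrite /rownorm sqrtr_gt0.
  have [k0 hk0] : exists k0, G j k0 != 0.
    apply: boolp.contrapT => hne; move/negP: (hG j); apply; apply/eqP/rowP => k.
    rewrite !mxE; apply/eqP; apply: boolp.contrapT => hk; apply: hne; exists k; exact/negP.
  rewrite (bigD1 (rshift nx k0)) //=.
  apply: (@lt_le_trans _ _ (H j (rshift nx k0) ^+ 2)).
    by rewrite /H /Hbar row_mxEr exprn_even_gt0 //=.
  by rewrite lerDl sumr_ge0 // => k _; apply: sqr_ge0.
pose s j v := slack H w j v.
have hs0 : forall j v, Vset H w v -> 0 <= s j v.
  by move=> j v Hv; rewrite /s /slack divr_ge0 ?subr_ge0 ?(ltW (ha j)) //; apply: Hv.
have nfitE : forall v r, 0 <= r -> nfit H w v r = #|[set j | (r <= s j v)%R]%SET|.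
  move=> v r r0; rewrite /nfit; apply: eq_card => j; rewrite [in RHS]inE.
  apply/idP/idP => [/asboolP/asboolP/(@ball_sub _ _ _ H w j v r (ha j) r0) //|h].
  by apply/asboolP/asboolP/(@ball_sub _ _ _ H w j v r (ha j) r0).
case: (ltnP i nc) => hinc; last first.
  have -> : i = nc by apply/eqP; rewrite eqn_leq hi2 hinc.
  exists 1; split => // M _.
  rewrite /milp_value /sigma subnn.
  have -> : [set r%:E | r in [set r : R | exists (v : 'cV[R]_(nx + nz)) (delta : 'I_nc -> bool),
     [/\ Vset H w v, 0 <= r,
         (forall j, slack H w j v - M * (delta j)%:R < r /\
                    r <= slack H w j v + M * (1 - (delta j)%:R)) &
         (\sum_(j < nc) (delta j : nat) < 0)%N]]] = set0.
    by apply/seteqP; split => x //= [r [v [d [_ _ _]]]]; rewrite ltn0.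
  rewrite ereal_inf0; apply: sup_pinfty => x; exists (Order.max x 0); last by rewrite le_max lexx.
  split; first by rewrite le_max lexx orbT.
  by apply: le_ereal_inf_tmp => y [v _ <-]; rewrite lee_fin ler0n.
pose T := ('cV[R]_(nx + nz) * R)%type.
pose seg (p q : T) (t : R) : T := (p.1 + t *: (q.1 - p.1), p.2 + t * (q.2 - p.2)).
pose cs (j : 'I_nc) := fun p : T => s j p.1 - p.2.
pose cv (j : 'I_nc) := fun p : T => (H *m p.1) j 0 - w j 0.
pose IU (U : {set 'I_nc}) := map cs (enum U) ++ map cv (enum 'I_nc).
have feasIU : forall (U : {set 'I_nc}) (p : T), feas R T (IU U) [::] p <->
    (forall j, j \in U -> s j p.1 <= p.2) /\ Vset H w p.1.
  move=> U p; split.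
    case=> h _; split.
      move=> j jU; rewrite -subr_le0; apply: (h (cs j)).
      by apply: List.in_or_app; left; apply: in_map_in; apply/In_mem; rewrite mem_enum.
    move=> j; rewrite -subr_le0; apply: (h (cv j)).
    by apply: List.in_or_app; right; apply: in_map_in; apply/In_mem; rewrite mem_enum.
  case=> h1 h2; split; last by [].
  move=> h hh0; case: (List.in_app_or _ _ _ hh0) => hh; have [j hj hE] := in_map_ex hh; subst h.
    by rewrite /cs subr_le0; apply: h1; move/In_mem: hj; rewrite mem_enum.
  by rewrite /cv subr_le0; apply: h2.
have LPU : forall U : {set 'I_nc}, exists q : T, (i < #|U|)%N ->
    [/\ Vset H w q.1, (forall j, j \in U -> s j q.1 <= q.2) &
        forall v t, Vset H w v -> (forall j, j \in U -> s j v <= t) -> q.2 <= t].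
  move=> U; case: (ltnP i #|U|) => hU; last by exists (0, 0).
  have [j0 j0U] : exists j0, j0 \in U by apply/card_gt0P; lia.
  have [|||||q [/feasIU [Hq1 Hq2] Hmin]] := @lp_attain R T seg (fun p : T => p.2) (IU U) [::].
  - by move=> x y t.
  - move=> h hh0; case: (List.in_app_or _ _ _ hh0) => hh x y t; have [j _ hE] := in_map_ex hh; subst h.
      by rewrite /cs /= /s slack_aff; ring.
    by rewrite /cv /= Hv_aff; ring.
  - by [].
  - exists (v0, \sum_j s j v0); apply/feasIU; split => // j _ /=.
    rewrite (bigD1 j) //= lerDl sumr_ge0 // => k _; exact: hs0.
  - exists 0 => p /feasIU [h1 h2]; apply: le_trans (h1 _ j0U); exact: hs0.
  exists q => _; split => // v t Hv Ht; apply: (Hmin (v, t)); exact/feasIU.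
have [qf Hqf] := boolp.choice LPU.
have HsetT : (i < #|[set: 'I_nc]%SET|)%N by rewrite cardsT card_ord.
have [U0 HU0 HU0min] := @real_arg_minP R _ [set: 'I_nc]%SET (fun U : {set 'I_nc} => (i < #|U|)%N)
   (fun U => (qf U).2) HsetT (fun U _ => num_real _).
set vs := (qf U0).1; set ts := (qf U0).2.
have [Vvs HvsU _] := Hqf U0 HU0.
have Amin : forall v r, Vset H w v -> 0 <= r -> r <= ts ->
    (nc - i <= #|[set j | (r <= s j v)%R]%SET|)%N.
  move=> v r Hv r0 rts; rewrite leqNgt; apply/negP => hlt.
  pose U := [set j | (s j v < r)%R]%SET.
  have hUc : U = ~: [set j | (r <= s j v)%R]%SET by apply/setP => j; rewrite !inE -ltNge.
  have hU : (i < #|U|)%N.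
    have := cardsC [set j | (r <= s j v)%R]%SET; rewrite -hUc card_ord; lia.
  have [j1 j1U] : exists j1, j1 \in U by apply/card_gt0P; lia.
  have rpos : 0 < r.
    by move: j1U; rewrite inE => h; apply: le_lt_trans h; apply: hs0.
  pose t := \big[Order.max/0]_(j in U) s j v.
  have tU : forall j, j \in U -> s j v <= t.
    by move=> j jU; rewrite /t (bigD1 j) //= le_max lexx.
  have tr : t < r.
    rewrite /t; apply: (big_ind (fun x => x < r)) => //.
      by move=> x y hx hy; rewrite gt_max hx hy.
    by move=> j; rewrite inE.
  have [_ _ HUm] := Hqf U hU.
  have h1 := HUm v t Hv tU.
  have h2 := HU0min U hU.
  rewrite -/ts in h2.
  lra.
have Astar : forall r, ts < r -> (#|[set j | (r <= s j vs)%R]%SET| < nc - i)%N.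
  move=> r hr.
  have sub : [set j | (r <= s j vs)%R]%SET \subset ~: U0.
    apply/fintype.subsetP => j; rewrite !inE => hj; apply/negP => jU.
    have := HvsU j jU; rewrite -/vs -/ts; lra.
  have h1 := subset_leq_card sub; have h2 := cardsC U0; rewrite card_ord in h2.
  move: HU0 h1 h2; set b := #|U0|; set c := #|~: U0|; set a := #|_|; lia.
have [j0 j0U] : exists j0, j0 \in U0 by apply/card_gt0P; lia.
have ts0 : 0 <= ts by apply: le_trans (HvsU j0 j0U); exact: hs0.
exists (ts + 1 + \sum_j s j vs); split.
  by rewrite -addrA ltr_wpDl // ltr_pwDl // sumr_ge0 // => j _; exact: hs0.
move=> M hM.
have hM1 : ts + 1 <= M.
  apply: le_trans hM; rewrite lerDl sumr_ge0 // => j _; exact: hs0.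
have hMs : forall j, s j vs + ts + 1 <= M.
  move=> j; apply: le_trans hM.
  have : s j vs <= \sum_k s k vs.
    by rewrite (bigD1 j) //= lerDl sumr_ge0 // => k _; exact: hs0.
  lra.
have -> : sigma H w i = ts%:E.
  rewrite /sigma; apply/eqP; rewrite eq_le; apply/andP; split.
    apply: ge_ereal_sup => x [r [r0 hr] <-]; rewrite lee_fin leNgt; apply/negP => hlt.
    move: hr; apply/negP; rewrite -ltNge.
    apply: (@le_lt_trans _ _ ((nfit H w vs r)%:R)%:E).
      by apply: ereal_inf_lbound; exists vs.
    by rewrite lte_fin ltr_nat nfitE // Astar.
  apply: ereal_sup_ubound; exists ts => //; split => //.
  apply: le_ereal_inf_tmp => y [v Hv <-].
  by rewrite lee_fin ler_nat nfitE // Amin.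
rewrite /milp_value; apply/eqP; rewrite eq_le; apply/andP; split.
  apply: le_ereal_inf_tmp => y [r [v [d [Hv r0 Hc Hsum]]] <-].
  rewrite lee_fin leNgt; apply/negP => hlt.
  have := Amin v r Hv r0 (ltW hlt); rewrite leqNgt => /negP; apply.
  apply: leq_ltn_trans Hsum; rewrite card_sum; apply: subset_leq_card.
  apply/fintype.subsetP => j; rewrite !inE => hj.
  have [h1 _] := Hc j; move: h1; case: (d j) => //=.
  rewrite mulr0 subr0 => h1; rewrite /s in hj; lra.
apply/lee_addgt0Pr => e e0.
pose r := ts + Order.min e 1.
have hmin0 : 0 < Order.min e 1 by rewrite lt_min e0 ltr01.
have hmine : Order.min e 1 <= e by rewrite ge_min lexx.
have hmin1 : Order.min e 1 <= 1 by rewrite ge_min lexx orbT.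
have hr1 : ts < r by rewrite /r; lra.
have hr2 : r <= ts + 1 by rewrite /r; lra.
apply: (@le_trans _ _ r%:E); last by rewrite -EFinD lee_fin /r lerD2l.
apply: ereal_inf_lbound; exists r => //.
exists vs, (fun j => (r <= s j vs)%R); split => //.
- by rewrite /r; lra.
- move=> j; have := hMs j; have := hs0 j vs Vvs; rewrite -/(s j vs).
  case: (lerP r (s j vs)) => /= hj h0 hm; rewrite ?mulr1 ?mulr0 ?subrr ?mulr0 ?subr0 ?addr0; split; move: hm h0 hj hr1 hr2 ts0; clear; move: r => r; clear; lra.
- by rewrite card_sum Astar.
Qed.
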